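(* Let $D=\{\mathbf{v}_1,\dots,\mathbf{v}_q\}\subset\mathbb{R}^{d}$ with all coordinates in $[-\sqrt{2/d},\sqrt{2/d}]$, let $\eta>0$ with $2/\eta$ an integer, and let $D_Q$ be the randomized quantization of $D$ described in the context. Then for each $i\in[d]$, $\mathbb{E}[w(D_Q,i)]=\sqrt{d/2}\,w(D,i)$, and with probability at least $1-2d\exp(-q/4)$, $\left|\frac1q\sqrt{\tfrac2d}\,w(D_Q,i)-\frac1q w(D,i)\right|\le\eta.$
   Context: $S=\{-1,-1+\eta,\dots,1-\eta,1\}$. For $x\in[-1,1]$ let $k=\lfloor (x+1)/\eta\rfloor$ and let the random quantizer be $Q(x)=-1+k\eta$ with probability $\frac{(k+1)\eta-1-x}{\eta}$ and $Q(x)=-1+(k+1)\eta$ with probability $\frac{x+1-k\eta}{\eta}$, applied independently to each coordinate. $D_Q=\{\tilde v_j=Q(\sqrt{d/2}\,\mathbf{v}_j)\}_{j=1}^q$, $w(D_Q,i)=\sum_{j=1}^q\tilde v_{ji}$ and $w(D,i)=\sum_{j=1}^q v_{ji}$. *)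

(* Defs.v *)
From mathcomp Require Import all_boot all_order all_algebra.
From mathcomp Require Import all_classical all_reals.
From mathcomp Require Import sequences exp.
Set Implicit Arguments. Unset Strict Implicit. Unset Printing Implicit Defensive.
Import Order.TTheory GRing.Theory Num.Theory.
Local Open Scope ring_scope.

Section Quant.
Variable R : realType.

Definition scal (d : nat) : R := Num.sqrt (d%:R / 2).

Definition qk (eta x : R) : int := Num.floor ((x + 1) / eta).

Definition qlow (eta x : R) : R := -1 + (qk eta x)%:~R * eta.

(* probability of rounding up to -1 + (k+1) eta *)
Definition pup (eta x : R) : R := (x + 1 - (qk eta x)%:~R * eta) / eta.

Definition qval (eta x : R) (b : bool) : R :=
  if b then qlow eta x + eta else qlow eta x.

Definition pcoin (eta x : R) (b : bool) : R :=
  if b then pup eta x else 1 - pup eta x.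

(* Sample space: one independent coin for every coordinate (j,i). *)
Definition Omega (q d : nat) := {ffun 'I_q * 'I_d -> bool}.

Definition prob_of (q d : nat) (eta : R) (v : 'I_q -> 'I_d -> R)
    (w : Omega q d) : R :=
  \prod_(ji : 'I_q * 'I_d) pcoin eta (scal d * v ji.1 ji.2) (w ji).

(* quantized dataset D_Q entry: tilde v_{j i} = Q(sqrt(d/2) v_{j i}) *)
Definition vQ (q d : nat) (eta : R) (v : 'I_q -> 'I_d -> R)
    (w : Omega q d) (j : 'I_q) (i : 'I_d) : R :=
  qval eta (scal d * v j i) (w (j, i)).

Definition wD (q d : nat) (v : 'I_q -> 'I_d -> R) (i : 'I_d) : R :=
  \sum_(j < q) v j i.
Definition wDQ (q d : nat) (eta : R) (v : 'I_q -> 'I_d -> R)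
    (w : Omega q d) (i : 'I_d) : R :=
  \sum_(j < q) vQ eta v w j i.

Definition Expect (q d : nat) (eta : R) (v : 'I_q -> 'I_d -> R)
    (X : Omega q d -> R) : R :=
  \sum_(w : Omega q d) prob_of eta v w * X w.
Definition Prob (q d : nat) (eta : R) (v : 'I_q -> 'I_d -> R)
    (E : pred (Omega q d)) : R :=
  \sum_(w : Omega q d | E w) prob_of eta v w.

End Quant.

(* Main.v *)
Require Import Defs.
From mathcomp Require Import all_boot all_order all_algebra.
From mathcomp Require Import all_classical all_reals.
From mathcomp Require Import sequences exp.
From mathcomp Require Import convex interval_inference unstable ring lra.
Import Order.TTheory GRing.Theory Num.Theory.
Local Open Scope ring_scope.
Lemma chord (R : realType) (m y : R) : -1 <= y -> y <= 1 ->
  expR (m * y) <= (1 + y) / 2 * expR m + (1 - y) / 2 * expR (- m).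
Proof.
move=> h1 h2.
have t0 : 0 <= (1 + y) / 2 by lra.
have t1 : (1 + y) / 2 <= 1 by lra.
have := @convex_expR R (Itv01 t0 t1) m (- m).
rewrite !convRE /= /onem.
have -> : (1 + y) / 2 * m + (1 - (1 + y) / 2) * - m = m * y by field.
by have -> : 1 - (1 + y) / 2 = (1 - y) / 2 by field.
Qed.

Lemma xinv_mono (R : realType) (A C : R) : 1 <= A -> A <= C ->
  A + A^-1 <= C + C^-1.
Proof.
move=> h1 h2.
have A0 : 0 < A by lra.
have C0 : 0 < C by lra.
have e : A^-1 - C^-1 = A^-1 * C^-1 * (C - A).
  by field; rewrite ?gt_eqF //; apply/andP; split; rewrite gt_eqF.
have i1 : A^-1 * C^-1 <= 1.
  have iA : A^-1 <= 1 by rewrite invf_le1.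
  have iC : C^-1 <= 1 by rewrite invf_le1 //; lra.
  by apply: mulr_ile1 => //; rewrite invr_ge0 ltW.
have : A^-1 * C^-1 * (C - A) <= C - A by apply: ler_piMl => //; lra.
lra.
Qed.

Lemma cosh_bound (R : realType) :
  (expR (7/8) + expR (- (7/8))) / 2 <= expR (7/8 / Num.sqrt 2 - 1/4) :> R.
Proof.
have G : expR (46/125) <= expR (7/8 / Num.sqrt 2 - 1/4 : R).
  rewrite ler_expR.
  have s0 : 0 < Num.sqrt (2 : R) by rewrite sqrtr_gt0; lra.
  have s1 : Num.sqrt (2 : R) <= 99/70.
    have : Num.sqrt (2:R) <= Num.sqrt ((99/70)^+2).
      by rewrite ler_sqrt; lra.
    rewrite sqrtr_sqr ger0_norm; lra.
  suff : 309/500 <= 7/8 / Num.sqrt (2:R) by lra.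
  rewrite ler_pdivlMr //; lra.
have E : (2023/2000)^+32 <= expR (46/125 : R).
  have -> : (46/125 : R) = 23/2000 * 32%:R by field.
  rewrite expRM_natr; apply: lerXn2r.
  - rewrite nnegrE; lra.
  - by rewrite nnegrE expR_ge0.
  - have := expR_ge1Dx (23/2000 : R); lra.
have N : ((256/249)^+32 + (249/256)^+32) / 2 <= (2023/2000)^+32 :> R.
  clear; lra.
apply: le_trans G; apply: le_trans E; apply: le_trans N.
rewrite ler_pM2r; last by rewrite invr_gt0; lra.
clear.
set a := expR (7/256 : R).
have a1 : 263/256 <= a by rewrite /a; have := expR_ge1Dx (7/256 : R); lra.
have a0 : 0 < a by rewrite /a expR_gt0.
have ai : a^-1 >= 249/256.
  rewrite /a -expRN; have := expR_ge1Dx (- (7/256) : R); lra.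
have a2 : a <= 256/249.
  have := ler_wpM2l (ltW a0) ai; rewrite divff ?gt_eqF //; lra.
have e1 : expR (7/8 : R) = a ^+ 32.
  by rewrite /a -expRM_natr; congr expR; field.
have e2 : expR (- (7/8) : R) = (a ^+ 32)^-1 by rewrite expRN e1.
rewrite e1 e2.
have A1 : 1 <= a ^+ 32 by apply: exprn_ege1; lra.
have A2 : a ^+ 32 <= (256/249)^+32 by apply: lerXn2r; rewrite ?nnegrE; lra.
have H := @xinv_mono R _ _ A1 A2.
have eC : ((256/249)^+32)^-1 = (249/256)^+32 :> R.
  by rewrite -exprVn invf_div.
by rewrite eC in H.
Qed.

Lemma prodsum (R : realType) (I : finType) (c f : I -> bool -> R) :
  \sum_(w : {ffun I -> bool}) (\prod_k c k (w k)) * (\prod_k f k (w k)) =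
  \prod_k \sum_b c k b * f k b.
Proof.
rewrite bigA_distr_bigA; apply: eq_bigr => w _; by rewrite -big_split.
Qed.

Lemma sum_single (R : realType) (I : finType) (c : I -> bool -> R)
  (hc : forall k, c k true + c k false = 1) (k0 : I) (g : bool -> R) :
  \sum_(w : {ffun I -> bool}) (\prod_k c k (w k)) * g (w k0) =
  \sum_b c k0 b * g b.
Proof.
pose f := fun k b => if k == k0 then g b else 1.
transitivity (\sum_(w : {ffun I -> bool}) (\prod_k c k (w k)) * \prod_k f k (w k)).
  apply: eq_bigr => w _; congr (_ * _).
  by rewrite /f -big_mkcond big_pred1_eq.
rewrite (@prodsum R _ c f).
rewrite (bigD1 k0) //=.
rewrite [X in _ * X]big1 => [|k /negPf hk]; last by rewrite big_bool /f /= hk !mulr1 hc.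
by rewrite mulr1; apply: eq_bigr => b _; rewrite /f /= eqxx.
Qed.

Lemma sum_one (R : realType) (I : finType) (c : I -> bool -> R)
  (hc : forall k, c k true + c k false = 1) :
  \sum_(w : {ffun I -> bool}) (\prod_k c k (w k)) = 1.
Proof.
pose f := fun (k : I) (b : bool) => (1 : R).
transitivity (\sum_(w : {ffun I -> bool}) (\prod_k c k (w k)) * \prod_k f k (w k)).
  by apply: eq_bigr => w _; rewrite [X in _ * X]big1 ?mulr1.
rewrite (@prodsum R _ c f).
by apply: big1 => k _; rewrite big_bool /f /= !mulr1 hc.
Qed.

Lemma prod_pair (R : realType) (q d : nat) (F : 'I_q * 'I_d -> R) :
  \prod_k F k = \prod_j \prod_i' F (j, i').
Proof. by rewrite pair_bigA; apply: eq_bigr => -[a b] _. Qed.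

Lemma sum_row (R : realType) (q d : nat) (c : 'I_q * 'I_d -> bool -> R)
  (hc : forall k, c k true + c k false = 1) (i : 'I_d)
  (h : 'I_q -> bool -> R) :
  \sum_(w : {ffun 'I_q * 'I_d -> bool}) (\prod_k c k (w k)) *
      \prod_j h j (w (j, i)) =
  \prod_j \sum_b c (j, i) b * h j b.
Proof.
pose f := fun (k : 'I_q * 'I_d) b => if k.2 == i then h k.1 b else 1.
transitivity (\sum_(w : {ffun 'I_q * 'I_d -> bool}) (\prod_k c k (w k)) * \prod_k f k (w k)).
  apply: eq_bigr => w _; congr (_ * _).
  rewrite (@prod_pair R q d (fun k => f k (w k))) /=; apply: eq_bigr => j _.
  by rewrite /f /= -big_mkcond big_pred1_eq.
rewrite (@prodsum R _ c f) (@prod_pair R q d (fun k => \sum_b c k b * f k b)) /=.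
apply: eq_bigr => j _.
rewrite (bigD1 i) //=.
rewrite [X in _ * X]big1 => [|k /negPf hk]; last by rewrite big_bool /f /= hk !mulr1 hc.
by rewrite mulr1; apply: eq_bigr => b _; rewrite /f /= eqxx.
Qed.

Lemma avg_bound (R : realType) (ct cf yt yf m : R) :
  0 <= ct -> 0 <= cf -> ct + cf = 1 -> ct * yt + cf * yf = 0 ->
  -1 <= yt -> yt <= 1 -> -1 <= yf -> yf <= 1 ->
  ct * expR (m * yt) + cf * expR (m * yf) <= (expR m + expR (- m)) / 2.
Proof.
move=> h0 h1 h2 h3 a1 a2 a3 a4.
have Ht := ler_wpM2l h0 (@chord R m yt a1 a2).
have Hf := ler_wpM2l h1 (@chord R m yf a3 a4).
apply: le_trans (lerD Ht Hf) _.
set E1 := expR m; set E2 := expR (- m).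
have -> : ct * ((1 + yt) / 2 * E1 + (1 - yt) / 2 * E2) +
          cf * ((1 + yf) / 2 * E1 + (1 - yf) / 2 * E2) =
          ((ct + cf) * (E1 + E2) + (ct * yt + cf * yf) * (E1 - E2)) / 2
  by ring.
by rewrite h2 h3 mul1r mul0r addr0.
Qed.

Lemma coord (R : realType) (eta x : R) : 0 < eta ->
  [/\ 0 <= pup eta x, pup eta x <= 1 & x = qlow eta x + eta * pup eta x].
Proof.
move=> he; rewrite /pup /qlow /qk.
set y := (x + 1) / eta.
have h1 := floor_le y. have h2 := floorD1_gt y.
rewrite intrD in h2.
set k := ((Num.floor y)%:~R : R) in h1 h2 *.
have ne : eta != 0 by rewrite gt_eqF.
have e : (x + 1 - k * eta) / eta = y - k by rewrite /y; field.
rewrite e; split; [lra | lra | ].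
by rewrite /y; field.
Qed.

Lemma one_side (R : realType) (q d : nat) (c : 'I_q * 'I_d -> bool -> R)
  (hc : forall k, c k true + c k false = 1) (hc0 : forall k b, 0 <= c k b)
  (i : 'I_d) (eta : R) (he : 0 < eta) (G : 'I_q -> bool -> R)
  (hm : forall j, c (j, i) true * G j true + c (j, i) false * G j false = 0)
  (hb : forall j b, `|G j b| <= eta) :
  \sum_(w : {ffun 'I_q * 'I_d -> bool}) (\prod_k c k (w k)) *
      expR (7/8/eta * \sum_j G j (w (j, i)))
  <= ((expR (7/8) + expR (- (7/8))) / 2) ^+ q.
Proof.
under eq_bigr do rewrite mulr_sumr expR_sum.
rewrite (@sum_row _ _ _ c hc i (fun j b => expR (7/8/eta * G j b))).
have -> : ((expR (7/8) + expR (- (7/8))) / 2) ^+ q =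
  \prod_(j : 'I_q) ((expR (7/8) + expR (- (7/8))) / 2 : R).
  by rewrite prodr_const card_ord.
apply: ler_prod => j _; apply/andP; split.
  by apply: sumr_ge0 => b _; rewrite mulr_ge0 ?expR_ge0.
rewrite big_bool.
have ne : eta != 0 by rewrite gt_eqF.
have E : forall b, 7/8/eta * G j b = 7/8 * (G j b / eta).
  by move=> b; field.
rewrite !E; apply: avg_bound => //.
- by rewrite !mulrA -mulrDl (hm j) mul0r.
- have := hb j true; rewrite ler_norml => /andP[h1 h2].
  by rewrite ler_pdivlMr //; lra.
- have := hb j true; rewrite ler_norml => /andP[h1 h2].
  by rewrite ler_pdivrMr //; lra.
- have := hb j false; rewrite ler_norml => /andP[h1 h2].
  by rewrite ler_pdivlMr //; lra.
- have := hb j false; rewrite ler_norml => /andP[h1 h2].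
  by rewrite ler_pdivrMr //; lra.
Qed.

Lemma qfacts (R : realType) (eta x : R) : 0 < eta ->
  [/\ pup eta x * (qval eta x true - x) + (1 - pup eta x) * (qval eta x false - x) = 0,
      forall b, `|qval eta x b - x| <= eta,
      pup eta x * qval eta x true + (1 - pup eta x) * qval eta x false = x,
      0 <= pup eta x & pup eta x <= 1].
Proof.
move=> he; rewrite /qval; have [h1 h2 hx] := @coord R eta x he.
move: h1 h2 hx; generalize (pup eta x) (qlow eta x) => p l h1 h2 hx.
subst x.
have e1 : 0 <= eta * p by rewrite mulr_ge0 // ltW.
have e2 : eta * p <= eta by rewrite ler_piMr // ltW.
split => //; try ring.
by case; rewrite ler_norml; apply/andP; split; lra.
Qed.

Theorem lemma2 (R : realType) (q d : nat) (v : 'I_q -> 'I_d -> R) (eta : R)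
  (hv : forall j i, `|v j i| <= Num.sqrt (2 / d%:R))
  (heta : 0 < eta) (hint : exists m : nat, 2 / eta = m%:R) :
  forall i : 'I_d,
    Expect eta v (fun w => wDQ eta v w i) = scal R d * wD v i /\
    Prob eta v (fun w => `| (q%:R)^-1 * Num.sqrt (2 / d%:R) * wDQ eta v w i
                            - (q%:R)^-1 * wD v i | <= eta)
      >= 1 - 2 * d%:R * expR (- (q%:R / 4)).
Proof.
move=> i.
have d0 : (0 < d)%N := leq_ltn_trans (leq0n _) (ltn_ord i).
pose c := fun (k : 'I_q * 'I_d) b => pcoin eta (scal R d * v k.1 k.2) b.
have hc : forall k, c k true + c k false = 1.
  by move=> k; rewrite /c /pcoin addrC subrK.
have hc0 : forall k b, 0 <= c k b.
  move=> k b; have [_ _ _ h1 h2] := @qfacts R eta (scal R d * v k.1 k.2) heta.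
  by case: b; rewrite /c /pcoin /=; lra.
split.
  rewrite /Expect /prob_of /wDQ /wD.
  under eq_bigr do rewrite mulr_sumr.
  rewrite exchange_big /= mulr_sumr; apply: eq_bigr => j _.
  rewrite /vQ (@sum_single R _ c hc (j, i) (qval eta (scal R d * v j i))).
  rewrite big_bool /c /pcoin /=.
  by have [_ _ -> _ _] := @qfacts R eta (scal R d * v j i) heta.
pose P := fun w : Omega q d => \prod_k c k (w k).
pose E := fun w : Omega q d => `| (q%:R)^-1 * Num.sqrt (2 / d%:R) * wDQ eta v w i
                            - (q%:R)^-1 * wD v i | <= eta.
change (1 - 2 * d%:R * expR (- (q%:R / 4)) <= \sum_(w | E w) P w).
pose G := fun (j : 'I_q) b => qval eta (scal R d * v j i) b - scal R d * v j i.
pose S := fun w : Omega q d => \sum_j G j (w (j, i)).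
pose s2 := Num.sqrt (2 / d%:R : R).
have dR : (1 : R) <= d%:R by rewrite ler1n.
have s2scal : s2 * scal R d = 1.
  rewrite /s2 /scal -sqrtrM ?divr_ge0 ?ler0n //.
  have -> : 2 / d%:R * (d%:R / 2) = 1 :> R.
    by field; rewrite pnatr_eq0 -lt0n.
  exact: sqrtr1.
have key : forall w, q%:R^-1 * s2 * wDQ eta v w i - q%:R^-1 * wD v i
                     = q%:R^-1 * s2 * S w.
  move=> w; rewrite /S /G /wDQ /vQ sumrB.
  have hB : s2 * \sum_j scal R d * v j i = wD v i.
    by rewrite mulr_sumr; apply: eq_bigr => j _; rewrite mulrA s2scal mul1r.
  rewrite -hB; ring.
have sq0 : 0 < Num.sqrt (2 : R) by rewrite sqrtr_gt0; lra.
have s2le : s2 <= Num.sqrt 2.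
  rewrite /s2 ler_sqrt; last lra.
  by rewrite ler_pdivrMr; lra.
have evt : forall w, `|S w| <= q%:R * eta / Num.sqrt 2 -> E w.
  move=> w hS; rewrite /E /= key.
  have [q0|qp] := eqVneq q 0%N.
    by rewrite q0 invr0 !mul0r normr0 ltW.
  have qR : (0 : R) < q%:R by rewrite ltr0n lt0n.
  have h1 : s2 * `|S w| <= q%:R * eta.
    apply: le_trans (ler_pM (sqrtr_ge0 _) (normr_ge0 _) s2le hS) _.
    by rewrite mulrC divfK ?gt_eqF.
  rewrite -mulrA normrM normrM ger0_norm ?invr_ge0 ?ler0n //.
  by rewrite ger0_norm ?sqrtr_ge0 // ler_pdivrMl.
pose lam := 7 / 8 / eta : R.
pose t := q%:R * eta / Num.sqrt 2.
have lp : 0 < lam by rewrite /lam divr_gt0 //; lra.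
pose Z := fun w => expR (lam * S w) * expR (- (lam * t)) +
                   expR (lam * - S w) * expR (- (lam * t)).
have ex1 : forall w, ~~ E w -> 1 <= Z w.
  move=> w nE.
  have nS : ~~ (`|S w| <= t) by apply/negP => h; move/negP: nE; apply; exact: evt.
  rewrite ler_norml negb_and -!ltNge in nS.
  rewrite /Z -!expRD.
  case/orP: nS => h.
    have h2 : 1 < expR (lam * - S w + - (lam * t)).
      by rewrite expR_gt1 -mulrN -mulrDr; apply: mulr_gt0 => //; lra.
    have := expR_ge0 (lam * S w + - (lam * t)); lra.
  have h2 : 1 < expR (lam * S w + - (lam * t)).
    by rewrite expR_gt1 -mulrN -mulrDr; apply: mulr_gt0 => //; lra.
  have := expR_ge0 (lam * - S w + - (lam * t)); lra.
have P0 : forall w, 0 <= P w by move=> w; apply: prodr_ge0 => k _; exact: hc0.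
have tot : \sum_(w | E w) P w + \sum_(w | ~~ E w) P w = 1.
  by have := @sum_one R _ c hc; rewrite (bigID E) /=.
have bnd : \sum_(w | ~~ E w) P w <= \sum_w P w * Z w.
  apply: (@le_trans _ _ (\sum_(w | ~~ E w) P w * Z w)).
    apply: ler_sum => w nE; rewrite -{1}[P w]mulr1; apply: ler_wpM2l => //.
    exact: ex1.
  rewrite [X in _ <= X](bigID (fun w => ~~ E w)) /= lerDl.
  by apply: sumr_ge0 => w _; rewrite mulr_ge0 // /Z addr_ge0 // mulr_ge0 // expR_ge0.
have hm : forall j, c (j, i) true * G j true + c (j, i) false * G j false = 0.
  by move=> j; rewrite /c /pcoin /G /=; have [-> _ _ _ _] := @qfacts R eta (scal R d * v j i) heta.
have hb : forall j b, `|G j b| <= eta.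
  by move=> j b; rewrite /G; have [_ H _ _ _] := @qfacts R eta (scal R d * v j i) heta; exact: H.
have o1 := @one_side R q d c hc hc0 i eta heta G hm hb.
have hm' : forall j, c (j, i) true * (fun j b => - G j b) j true +
                     c (j, i) false * (fun j b => - G j b) j false = 0.
  by move=> j /=; rewrite !mulrN -opprD hm oppr0.
have hb' : forall j b, `|(fun j b => - G j b) j b| <= eta.
  by move=> j b /=; rewrite normrN.
have o2 := @one_side R q d c hc hc0 i eta heta _ hm' hb'.
set K := (_ ^+ q) in o1 o2.
have eq2 : \sum_w P w * expR (lam * - S w) =
           \sum_(w : {ffun 'I_q * 'I_d -> bool}) (\prod_k c k (w k)) *
              expR (7/8/eta * \sum_j (fun j b => - G j b) j (w (j, i))).
  by apply: eq_bigr => w _; rewrite /= sumrN.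
have Zsum : \sum_w P w * Z w = expR (- (lam * t)) *
   (\sum_w P w * expR (lam * S w) + \sum_w P w * expR (lam * - S w)).
  rewrite mulrDr !mulr_sumr -big_split /=; apply: eq_bigr => w _; rewrite /Z; ring.
have A1 : \sum_w P w * expR (lam * S w) <= K by exact: o1.
have A2 : \sum_w P w * expR (lam * - S w) <= K by rewrite eq2; exact: o2.
have cb := cosh_bound R.
have Kle : K <= expR (q%:R * (7/8 / Num.sqrt 2 - 1/4)).
  rewrite expRM_natl /K; apply: lerXn2r.
  - rewrite nnegrE; apply: divr_ge0 => //; apply: addr_ge0; exact: expR_ge0.
  - by rewrite nnegrE expR_ge0.
  - exact: cb.
have ee : - (lam * t) + q%:R * (7/8 / Num.sqrt 2 - 1/4) = - (q%:R / 4).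
  by rewrite /lam /t; field; rewrite !gt_eqF.
have F1 : expR (- (lam * t)) * K <= expR (- (q%:R / 4)).
  rewrite -ee expRD; apply: ler_wpM2l => //; exact: expR_ge0.
have F2 : expR (- (lam * t)) *
   (\sum_w P w * expR (lam * S w) + \sum_w P w * expR (lam * - S w))
   <= 2 * (expR (- (lam * t)) * K).
  rewrite mulr2n mulrDl mul1r -mulrDr; apply: ler_wpM2l; first exact: expR_ge0.
  exact: lerD.
have F3 : 2 * expR (- (q%:R / 4)) <= 2 * d%:R * expR (- (q%:R / 4)) :> R.
  rewrite ler_pM2r ?expR_gt0 //; lra.
move: tot bnd Zsum F1 F2 F3.
set a := \sum_(w | E w) P w.
set b := \sum_(w | ~~ E w) P w.
set z := \sum_w P w * Z w.
set y := expR (- (lam * t)) * _.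
set y2 := expR (- (lam * t)) * K.
set x := expR (- (q%:R / 4)).
lra.
Qed.
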